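(* Let $\gamma\in\Gamma$, $d=e_1+\varepsilon\gamma$, and suppose $g^*(d)=A_{\phi(\gamma)}d$ for all small $\varepsilon>0$. Suppose that after $r$ edge failures the graph $\mathcal G^{(r+1)}$ is still connected (so $d^{(r+1)}=d$ and $g^{(r+1)}=g^*(d)$), and let $j,k\in\mathcal E^{(r+1)}$ be such that the sign of $f^{(r+1)}_j(d)f^{(r+1)}_k(d)$ is the same (either $\ge0$ or $\le0$) for all small $\varepsilon$. Then $\psi^{(r+1)}_j(d)=\psi^{(r+1)}_k(d)$ for all $\varepsilon\ge0$ sufficiently small if and only if all three of the following hold: $$e_1^TQ^{(r+1)}(A_{\phi(\gamma)}-I)e_1=0,$$ $$e_1^T\big[Q^{(r+1)}(A_{\phi(\gamma)}-I)+(A_{\phi(\gamma)}-I)^T(Q^{(r+1)})^T\big]\gamma=0,$$ $$\gamma^TQ^{(r+1)}(A_{\phi(\gamma)}-I)\gamma=0,$$ where $Q^{(r+1)}=v_j^Tv_k^{(r+1)}-v_k^Tv_j^{(r+1)}$ if $f^{(r+1)}_k(d)f^{(r+1)}_j(d)\ge0$ and $Q^{(r+1)}=v_j^Tv_k^{(r+1)}+v_k^Tv_j^{(r+1)}$ otherwise.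
   Context: $\mathcal G$ is a simple connected oriented graph with nodes $\{1,\dots,n\}$, $m$ edges, incidence matrix $C$, PTDF matrix $V=C(C^TC)^+$; $e$ all-ones; $\lambda\in(0,1)$, $\lambda^*\ge\lambda$. $\Gamma=\{\gamma\in\mathbb R^n:\gamma_1=0,\gamma\ge0,e^T\gamma=1\}$. $g^*(d)$ is the DC-OPF optimal generation (unique minimizer of $\frac12\sum g_i^2$ over $g\ge0$ with $e^Tg=e^Td$, $-\lambda|Vd|\le V(d-g)\le\lambda|Vd|$), and $A_{\phi(\gamma)}\in\mathbb R^{n\times n}$ is a matrix, depending only on $\gamma$, with $g^*(d)=A_{\phi(\gamma)}d$ for small $\varepsilon>0$. In the cascade, after $r$ edge failures the graph is $\mathcal G^{(r+1)}$ with surviving edges $\mathcal E^{(r+1)}$ and PTDF matrix $V^{(r+1)}$ (computed from the incidence matrix with rows of removed edges zeroed); flows are $f^{(r+1)}(d)=V^{(r+1)}(d^{(r+1)}-g^{(r+1)})$, emergency limits $F(d)=\lambda^*Vd$, relative exceedances $\psi^{(r+1)}_i(d)=|f^{(r+1)}_i(d)|/F_i(d)$. $v_l=e_l^TV$ and $v^{(r+1)}_l=e_l^TV^{(r+1)}$ are the $l$-th rows. *)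

(* Defs.v *)
From HB Require Import structures.
From mathcomp Require Import all_boot all_order all_algebra.
From mathcomp Require Import reals.
Set Implicit Arguments. Unset Strict Implicit. Unset Printing Implicit Defensive.
Import Order.TTheory GRing.Theory Num.Theory.
Local Open Scope ring_scope.

(* Nodes are 'I_n.+1 (the paper's node 1 is ord0, the paper's n is n.+1);
   edges are 'I_m.  Edge i is oriented from [src i] to [dst i]. *)

Section Defs.
Variable R : realType.

Definition simple_graph (n m : nat) (src dst : 'I_m -> 'I_n) : Prop :=
  (forall i, src i != dst i) /\
  (forall i i', (src i == src i') && (dst i == dst i') ||
                (src i == dst i') && (dst i == src i') -> i = i').

Definition adj_in (n m : nat) (src dst : 'I_m -> 'I_n) (S : {set 'I_m}) :
  rel 'I_n :=
  fun x y => [exists i, (i \in S) &&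
     (((src i == x) && (dst i == y)) || ((src i == y) && (dst i == x)))].

Definition connected_in (n m : nat) (src dst : 'I_m -> 'I_n) (S : {set 'I_m}) :
  Prop := forall x y, connect (adj_in src dst S) x y.

Definition incidence (n m : nat) (src dst : 'I_m -> 'I_n) : 'M[R]_(m, n) :=
  \matrix_(i, k) ((k == src i)%:R - (k == dst i)%:R).

(* incidence matrix with the rows of the removed edges (outside S) zeroed *)
Definition incidence_in (n m : nat) (src dst : 'I_m -> 'I_n)
  (S : {set 'I_m}) : 'M[R]_(m, n) :=
  \matrix_(i, k) (if i \in S then incidence src dst i k else 0).

Definition is_pinv (n : nat) (M P : 'M[R]_n) : Prop :=
  [/\ M *m P *m M = M, P *m M *m P = P,
      (M *m P)^T = M *m P & (P *m M)^T = P *m M].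

Definition is_PTDF (n m : nat) (C : 'M[R]_(m, n)) (V : 'M[R]_(m, n)) : Prop :=
  exists P : 'M[R]_n, is_pinv (C^T *m C) P /\ V = C *m P.

Definition sumv (n : nat) (x : 'cV[R]_n) : R := \sum_i x i 0.

Definition in_Gamma (n : nat) (g : 'cV[R]_n.+1) : Prop :=
  g ord0 0 = 0 /\ (forall i, 0 <= g i 0) /\ sumv g = 1.

Definition opf_feasible (n m : nat) (V : 'M[R]_(m, n)) (lam : R)
  (d g : 'cV[R]_n) : Prop :=
  [/\ forall i, 0 <= g i 0, sumv g = sumv d &
      forall l, `|(V *m (d - g)) l 0| <= lam * `|(V *m d) l 0|].

Definition opf_opt (n m : nat) (V : 'M[R]_(m, n)) (lam : R)
  (d g : 'cV[R]_n) : Prop :=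
  opf_feasible V lam d g /\
  forall g', opf_feasible V lam d g' ->
    \sum_i (g i 0) ^+ 2 / 2 <= \sum_i (g' i 0) ^+ 2 / 2.

Definition small_pos (P : R -> Prop) : Prop :=
  exists2 delta : R, 0 < delta & forall eps, 0 < eps -> eps < delta -> P eps.
Definition small_nneg (P : R -> Prop) : Prop :=
  exists2 delta : R, 0 < delta & forall eps, 0 <= eps -> eps < delta -> P eps.

Definition e1 (n : nat) : 'cV[R]_n.+1 := delta_mx ord0 0.
Definition dem (n : nat) (gam : 'cV[R]_n.+1) (eps : R) : 'cV[R]_n.+1 :=
  e1 n + eps *: gam.

Definition flow (n m : nat) (Vr : 'M[R]_(m, n)) (A : 'M[R]_n) (d : 'cV[R]_n)
  (l : 'I_m) : R := (Vr *m (d - A *m d)) l 0.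

Definition elim (n m : nat) (V : 'M[R]_(m, n)) (lams : R) (d : 'cV[R]_n)
  (l : 'I_m) : R := lams * (V *m d) l 0.

Definition psi (n m : nat) (V Vr : 'M[R]_(m, n)) (A : 'M[R]_n) (lams : R)
  (d : 'cV[R]_n) (l : 'I_m) : R :=
  `|flow Vr A d l| / elim V lams d l.

Definition Qmat (n m : nat) (V Vr : 'M[R]_(m, n)) (j k : 'I_m) (s : bool) :
  'M[R]_n :=
  if s then (row j V)^T *m row k Vr - (row k V)^T *m row j Vr
  else (row j V)^T *m row k Vr + (row k V)^T *m row j Vr.

End Defs.

(* Main.v *)
Require Import Defs.
From HB Require Import structures.
From mathcomp Require Import all_boot all_order all_algebra.
From mathcomp Require Import reals.
From mathcomp Require Import ring lra.
Import Order.TTheory GRing.Theory Num.Theory.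
Local Open Scope ring_scope.


Section H.
Variable R : realType.

Lemma m11 (X : 'M[R]_1) : X = 0 <-> X 0 0 = 0.
Proof.
split=> [->|h]; first by rewrite mxE.
by apply/matrixP=> i l; rewrite !ord1 h mxE.
Qed.

Lemma mul11 (X Y : 'M[R]_1) : (X *m Y) 0 0 = X 0 0 * Y 0 0.
Proof. by rewrite mxE big_ord1. Qed.

Lemma quad p (M : 'M[R]_p) (x y : 'cV[R]_p) (e : R) :
  ((x + e *: y)^T *m M *m (x + e *: y)) 0 0 =
  (x^T *m M *m x) 0 0 + e * (x^T *m (M + M^T) *m y) 0 0
  + e ^+ 2 * (y^T *m M *m y) 0 0.
Proof.
have T : (y^T *m M *m x) 0 0 = (x^T *m M^T *m y) 0 0.
  have -> : (y^T *m M *m x) 0 0 = ((y^T *m M *m x)^T) 0 0 by rewrite [RHS]mxE.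
  by rewrite !trmx_mul trmxK mulmxA.
have -> : (x + e *: y)^T = x^T + e *: y^T by apply/matrixP=> i l; rewrite !mxE.
rewrite !(mulmxDl, mulmxDr) -!scalemxAl -!scalemxAr ?scalerA.
move: T; move: (x^T *m M *m x) (y^T *m M *m x) (x^T *m M *m y) (y^T *m M *m y) (x^T *m M^T *m y) => a b c d f T.
rewrite !mxE T; ring.
Qed.

Lemma coeffs (a b c d : R) : 0 < d ->
  (forall e, 0 <= e -> e < d -> a + e * b + e ^+ 2 * c = 0) ->
  [/\ a = 0, b = 0 & c = 0].
Proof.
move=> d0 h.
have ha : a = 0 by have := h 0 (lexx _) d0; rewrite mul0r expr0n /= mul0r !addr0.
have e1 : 0 <= d / 2 by lra.
have e2 : d / 2 < d by lra.
have e3 : 0 <= d / 4 by lra.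
have e4 : d / 4 < d by lra.
have h1 := h _ e1 e2; have h2 := h _ e3 e4.
rewrite ha add0r in h1; rewrite ha add0r in h2.
have hc : c = 0.
  have E : 8 * (d / 2 * b + (d / 2) ^+ 2 * c) - 16 * (d / 4 * b + (d / 4) ^+ 2 * c)
           = d ^+ 2 * c by field.
  rewrite h1 h2 !mulr0 subr0 in E.
  move/esym/eqP: E; rewrite mulf_eq0 expf_eq0 /= => /orP[/eqP|/eqP //]; lra.
split=> //; rewrite hc mulr0 addr0 in h1.
move/eqP: h1; rewrite mulf_eq0 => /orP[/eqP|/eqP //]; lra.
Qed.

Lemma psi_eq (fj fk Fj Fk : R) : Fj != 0 -> Fk != 0 ->
  `|fj| / Fj = `|fk| / Fk <-> `|fj| * Fk = `|fk| * Fj.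
Proof.
move=> hj hk; split=> [h|h]; apply/eqP; [rewrite -eqr_div // | rewrite eqr_div //];
  exact/eqP.
Qed.

Lemma sgn_pos (fj fk Fj Fk : R) : 0 <= fj * fk ->
  `|fj| * Fk = `|fk| * Fj <-> fj * Fk - fk * Fj = 0.
Proof.
move=> h.
case: (lerP 0 fj) => hj; case: (lerP 0 fk) => hk;
  rewrite ?(ger0_norm hj) ?(ger0_norm hk) ?(ltr0_norm hj) ?(ltr0_norm hk).
- split; lra.
- have -> : fj = 0 by nra.
  rewrite !mul0r; split; lra.
- have -> : fk = 0 by nra.
  rewrite !mul0r; split; lra.
- split; lra.
Qed.

Lemma sgn_neg (fj fk Fj Fk : R) : fj * fk <= 0 ->
  `|fj| * Fk = `|fk| * Fj <-> - (fj * Fk + fk * Fj) = 0.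
Proof.
move=> h.
case: (lerP 0 fj) => hj; case: (lerP 0 fk) => hk;
  rewrite ?(ger0_norm hj) ?(ger0_norm hk) ?(ltr0_norm hj) ?(ltr0_norm hk).
- have [->|->] : fj = 0 \/ fk = 0.
    case: (lerP fj 0) => a; first by left; lra.
    by right; nra.
  all: rewrite ?mul0r ?mulr0 ?add0r ?addr0; split=> E; nra.
Qed.



Lemma bil {p mm} (V Vr : 'M[R]_(mm, p)) (B : 'M[R]_p) (x : 'cV[R]_p) a b :
  (x^T *m ((row a V)^T *m row b Vr *m B) *m x) 0 0 =
  (V *m x) a 0 * (Vr *m (B *m x)) b 0.
Proof.
have -> : x^T *m ((row a V)^T *m row b Vr *m B) *m x =
   (x^T *m (row a V)^T) *m (row b Vr *m (B *m x)) by rewrite !mulmxA.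
rewrite mul11 -trmx_mul -!row_mul !mxE.
done.
Qed.

Lemma flowN {p mm} (Vr : 'M[R]_(mm, p)) (A : 'M[R]_p) (x : 'cV[R]_p) b :
  (Vr *m ((A - 1%:M) *m x)) b 0 = - flow Vr A x b.
Proof.
by rewrite /flow mulmxBl mul1mx -opprB mulmxN mxE.
Qed.

Lemma key p mm (V Vr : 'M[R]_(mm, p)) (A : 'M[R]_p) lams (x : 'cV[R]_p) j k s :
  lams * ((x^T *m (Qmat V Vr j k s *m (A - 1%:M)) *m x) 0 0) =
  if s then flow Vr A x j * elim V lams x k - flow Vr A x k * elim V lams x j
  else - (flow Vr A x j * elim V lams x k + flow Vr A x k * elim V lams x j).
Proof.
have E1 := bil V Vr (A - 1%:M) x j k.
have E2 := bil V Vr (A - 1%:M) x k j.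
rewrite !flowN in E1 E2.
rewrite /Qmat /elim.
move: E1 E2; set B := A - 1%:M.
set P := (row j V)^T *m row k Vr; set P' := (row k V)^T *m row j Vr.
case: s.
  have -> : x^T *m ((P - P') *m B) *m x = x^T *m (P *m B) *m x - x^T *m (P' *m B) *m x.
    by rewrite mulmxBl mulmxBr mulmxBl.
  move: (x^T *m (P *m B) *m x) (x^T *m (P' *m B) *m x) => Q1 Q2 E1 E2.
  rewrite mxE [X in _ + X]mxE E1 E2; ring.
have -> : x^T *m ((P + P') *m B) *m x = x^T *m (P *m B) *m x + x^T *m (P' *m B) *m x.
  by rewrite mulmxDl mulmxDr mulmxDl.
move: (x^T *m (P *m B) *m x) (x^T *m (P' *m B) *m x) => Q1 Q2 E1 E2.
rewrite mxE E1 E2; ring.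
Qed.
End H.

Theorem mainTheorem11 (R : realType) (n m : nat)
  (src dst : 'I_m -> 'I_n.+1) (V : 'M[R]_(m, n.+1)) (lam lams : R)
  (gam : 'cV[R]_n.+1) (A : 'M[R]_n.+1)
  (S : {set 'I_m}) (Vr : 'M[R]_(m, n.+1)) (j k : 'I_m) (s : bool) :
  simple_graph src dst ->
  connected_in src dst [set: 'I_m] ->
  is_PTDF (incidence R src dst) V ->
  0 < lam -> lam < 1 -> lam <= lams ->
  in_Gamma gam ->
  small_pos (fun eps => opf_opt V lam (dem gam eps) (A *m dem gam eps)) ->
  connected_in src dst S ->
  is_PTDF (incidence_in R src dst S) Vr ->
  j \in S -> k \in S ->
  (if s then
     small_nneg (fun eps =>
       0 <= flow Vr A (dem gam eps) j * flow Vr A (dem gam eps) k)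
   else
     small_nneg (fun eps =>
       flow Vr A (dem gam eps) j * flow Vr A (dem gam eps) k <= 0)) ->
  small_nneg (fun eps => elim V lams (dem gam eps) j != 0 /\
                         elim V lams (dem gam eps) k != 0) ->
  (small_nneg (fun eps => psi V Vr A lams (dem gam eps) j =
                          psi V Vr A lams (dem gam eps) k)
   <->
   [/\ (e1 R n)^T *m Qmat V Vr j k s *m (A - 1%:M) *m e1 R n = 0,
       (e1 R n)^T *m (Qmat V Vr j k s *m (A - 1%:M)
                    + (A - 1%:M)^T *m (Qmat V Vr j k s)^T) *m gam = 0
     & gam^T *m Qmat V Vr j k s *m (A - 1%:M) *m gam = 0]).
Proof.
move=> _ _ _ lam0 _ lamle _ _ _ _ _ _ hsign hel.
have lams0 : 0 < lams by apply: lt_le_trans lamle.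
set B := A - 1%:M.
set M := Qmat V Vr j k s *m B.
pose q e := ((dem gam e)^T *m M *m dem gam e) 0 0.
have [d1 d1p hs] : exists2 d1 : R, 0 < d1 & forall e, 0 <= e -> e < d1 ->
   (if s then 0 <= flow Vr A (dem gam e) j * flow Vr A (dem gam e) k
    else flow Vr A (dem gam e) j * flow Vr A (dem gam e) k <= 0).
  by move: hsign; case: (s) => -[d dp hd]; exists d.
case: hel => d2 d2p hel.
have EQ : forall e, 0 <= e -> e < d1 -> e < d2 ->
   psi V Vr A lams (dem gam e) j = psi V Vr A lams (dem gam e) k <-> q e = 0.
  move=> e e0 ed1 ed2.
  have [n1 n2] := hel e e0 ed2.
  have hse := hs e e0 ed1.
  rewrite /psi psi_eq //.
  have KK := key R _ _ V Vr A lams (dem gam e) j k s.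
  have qE : q e = 0 <-> lams * q e = 0.
    split=> [->|/eqP]; first by rewrite mulr0.
    by rewrite mulf_eq0 gt_eqF //= => /eqP.
  rewrite qE /q /M KK.
  move: hse; case: (s) => hse; [exact: sgn_pos | exact: sgn_neg].
have QE : forall e, q e = ((e1 R n)^T *m M *m e1 R n) 0 0
   + e * ((e1 R n)^T *m (M + M^T) *m gam) 0 0 + e ^+ 2 * (gam^T *m M *m gam) 0 0.
  by move=> e; rewrite /q /dem quad.
have G1 : (e1 R n)^T *m Qmat V Vr j k s *m B *m e1 R n = (e1 R n)^T *m M *m e1 R n.
  by rewrite /M mulmxA.
have G2 : (e1 R n)^T *m (Qmat V Vr j k s *m B + B^T *m (Qmat V Vr j k s)^T) *m gam
   = (e1 R n)^T *m (M + M^T) *m gam by rewrite /M trmx_mul.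
have G3 : gam^T *m Qmat V Vr j k s *m B *m gam = gam^T *m M *m gam.
  by rewrite /M mulmxA.
rewrite G1 G2 G3.
split.
  move=> [d3 d3p hpsi].
  pose d := Num.min d1 (Num.min d2 d3).
  have dp : 0 < d by rewrite /d !lt_min d1p d2p d3p.
  have [ha hb hc] : [/\ ((e1 R n)^T *m M *m e1 R n) 0 0 = 0,
      ((e1 R n)^T *m (M + M^T) *m gam) 0 0 = 0 & (gam^T *m M *m gam) 0 0 = 0].
    apply: (@coeffs R _ _ _ _ dp) => e e0 ed.
    move: ed; rewrite /d !lt_min => /and3P[ed1 ed2 ed3].
    rewrite -QE; apply/(EQ e e0 ed1 ed2); exact: hpsi.
  by split; apply/(m11 R).
move=> [/(m11 R) ha /(m11 R) hb /(m11 R) hc].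
exists (Num.min d1 d2); first by rewrite lt_min d1p d2p.
move=> e e0; rewrite lt_min => /andP[ed1 ed2].
apply/(EQ e e0 ed1 ed2); rewrite QE ha hb hc; ring.
Qed.
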